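(* Let $\mathbf{X}=(X_1,\dots,X_d)$ be a random vector with distribution function $F$ such that each $X_i$ is a.s. nonnegative with $0<E(X_i)<\infty$, and let $\|\mathbf{x}\|_F=E(\max(|x_0|,|x_1|X_1,\dots,|x_d|X_d))$ for $\mathbf{x}\in\mathbb{R}^{d+1}$. Then for any $x_1,\dots,x_d>0$, the right-derivative of $t\mapsto\|(t,1/x_1,\dots,1/x_d)\|_F$ at $t=1$ exists and equals $F(x_1,\dots,x_d)$. *)

(* Defs.v *)
From HB Require Import structures.
From mathcomp Require Import all_boot all_order all_algebra.
From mathcomp Require Import all_classical all_reals all_analysis.
Set Implicit Arguments. Unset Strict Implicit. Unset Printing Implicit Defensive.
Import Order.TTheory GRing.Theory Num.Theory.
Import numFieldNormedType.Exports.
Local Open Scope classical_set_scope.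
Local Open Scope ring_scope.

(* ||x||_F = E( max(|x_0|, |x_1| X_1, ..., |x_d| X_d) ), x = (x0, x) in R^{d+1},
   the components X_i of the random vector indexed by 'I_d. *)
Definition normF (d0 : measure_display) (T : measurableType d0) (R : realType)
  (P : probability T R) (d : nat) (X : 'I_d -> T -> R) (x0 : R) (x : 'I_d -> R) : R :=
  fine (\int[P]_w ((\big[Num.max/`|x0|]_(i < d) (`|x i| * X i w))%:E)).

Definition distF (d0 : measure_display) (T : measurableType d0) (R : realType)
  (P : probability T R) (d : nat) (X : 'I_d -> T -> R) (x : 'I_d -> R) : R :=
  fine (P [set w | forall i, X i w <= x i]).

(* Main.v *)
Require Import Defs.
From HB Require Import structures.
From mathcomp Require Import all_boot all_order all_algebra.
From mathcomp Require Import all_classical all_reals all_analysis.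
From mathcomp Require Import lra measurable_realfun lebesgue_integral.
Import Order.TTheory GRing.Theory Num.Theory.
Import numFieldNormedType.Exports.
Local Open Scope classical_set_scope.
Local Open Scope ring_scope.

Section helpers.
Context {R : realType}.

Lemma bigmax_shift (I : Type) (r : seq I) (F : I -> R) (c : R) : 0 <= c ->
  \big[Num.max/c]_(i <- r) F i = Num.max c (\big[Num.max/0]_(i <- r) F i).
Proof.
move=> c0; elim: r => [|a r IH]; first by rewrite !big_nil max_l.
by rewrite !big_cons IH maxCA.
Qed.

Lemma bigmax_ge0 (I : Type) (r : seq I) (F : I -> R) :
  0 <= \big[Num.max/0]_(i <- r) F i.
Proof.
elim: r => [|a r IH]; first by rewrite big_nil.
by rewrite big_cons le_max IH orbT.
Qed.

Lemma bigmax_le1 (I : Type) (r : seq I) (F : I -> R) :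
  (\big[Num.max/0]_(i <- r) F i <= 1) = all (fun i => F i <= 1) r.
Proof.
elim: r => [|a r IH]; first by rewrite big_nil ler01.
by rewrite big_cons ge_max IH.
Qed.

Lemma bigmax_le_sum (I : Type) (r : seq I) (F : I -> R) :
  \big[Num.max/0]_(i <- r) F i <= \sum_(i <- r) `|F i|.
Proof.
elim: r => [|a r IH]; first by rewrite big_nil big_nil.
rewrite big_cons big_cons ge_max; apply/andP; split.
  by rewrite (le_trans (ler_norm _))// lerDl sumr_ge0.
by rewrite (le_trans IH)// lerDr.
Qed.

Lemma ratio_bounds (h m : R) : 0 < h ->
  0 <= (Num.max (1 + h) m - Num.max 1 m) / h <= 1.
Proof.
move=> h0; apply/andP; split.
  apply: divr_ge0; last exact: ltW.
  rewrite subr_ge0 !maxEle.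
  case: ifP => a; case: ifP => b //; lra.
rewrite ler_pdivrMr // mul1r !maxEle.
case: ifP => a; case: ifP => b //; lra.
Qed.

End helpers.

Section mhelpers.
Context d0 (T : measurableType d0) (R : realType).

Lemma measurable_bigmax (I : Type) (r : seq I) (F : I -> T -> R) :
  (forall i, measurable_fun setT (F i)) ->
  measurable_fun setT (fun w => \big[Num.max/0]_(i <- r) F i w).
Proof.
move=> mF; elim: r => [|a r IH].
  rewrite (_ : (fun w => _) = cst 0); last by apply/funext => w; rewrite big_nil.
  exact: measurable_cst.
rewrite (_ : (fun w => _) = (F a) \max (fun w => \big[Num.max/0]_(i <- r) F i w)).
  exact: measurable_realfun.measurable_maxr.
by apply/funext => w; rewrite big_cons.
Qed.
End mhelpers.

Theorem corollary2p13 (d0 : measure_display) (T : measurableType d0) (R : realType)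
  (P : probability T R) (d : nat) (X : 'I_d -> T -> R)
  (Xmeas : forall i, measurable_fun setT (X i))
  (Xnneg : forall i, {ae P, forall w, 0 <= X i w})
  (Xint : forall i, P.-integrable setT (EFin \o X i))
  (Xpos : forall i, (0 < \int[P]_w (X i w)%:E)%E)
  (x : 'I_d -> R) (xpos : forall i, 0 < x i) :
  (fun h : R => (normF P X (1 + h) (fun i => (x i)^-1)
                 - normF P X 1 (fun i => (x i)^-1)) / h)
    @ 0^'+ --> distF P X x.
Proof.
pose M w := \big[Num.max/0]_(i < d) (`|(x i)^-1| * X i w).
have mM : measurable_fun setT M.
  apply: measurable_bigmax => i.
  apply: measurable_realfun.measurable_funM => //; exact: measurable_cst.
have mB c : measurable_fun setT (fun w => Num.max c (M w)).
  exact: measurable_realfun.measurable_maxr (measurable_cst c) mM.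
have intM : P.-integrable setT (EFin \o M).
  apply: (@le_integrable _ _ _ P setT measurableT _
    (fun w => \sum_(i < d) (`|(x i)^-1 * X i w|)%:E)).
  - exact/measurable_realfun.measurable_EFinP.
  - move=> w _ /=; rewrite sumEFin !abse_EFin lee_fin ger0_norm; last by apply: sumr_ge0.
    rewrite ger0_norm; last exact: bigmax_ge0.
    apply: (le_trans (bigmax_le_sum _ _ _)).
    by apply: ler_sum => i _; rewrite !normrM normr_id.
  - apply: (integrable_sum measurableT) => i _.
    rewrite (_ : (fun w => _) = abse \o (fun w => ((x i)^-1)%:E * (EFin \o X i) w)%E); last first.
      by apply/funext=> w /=.
    exact/integrable_abse/integrableZl.
have intB c : 0 <= c -> P.-integrable setT (fun w => (Num.max c (M w))%:E).
  move=> c0; apply: (@le_integrable _ _ _ P setT measurableT _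
    (fun w => (c + M w)%:E)).
  - exact/measurable_realfun.measurable_EFinP.
  - move=> w _; rewrite !abse_EFin lee_fin.
    have M0 : 0 <= M w by apply: bigmax_ge0.
    rewrite ger0_norm; last by rewrite le_max c0.
    rewrite ger0_norm; last by rewrite addr_ge0.
    by rewrite ge_max lerDl lerDr M0 c0.
  - rewrite (_ : (fun w => _) = (EFin \o cst c) \+ (EFin \o M)); last first.
      by apply/funext => w.
    apply: integrableD => //; exact: finite_measure_integrable_cst.
have normFE t : 0 <= t -> normF P X t (fun i => (x i)^-1) =
    fine (\int[P]_w (Num.max t (M w))%:E).
  move=> t0; rewrite /normF; congr fine; apply: eq_integral => w _.
  by rewrite bigmax_shift ?ger0_norm.
pose g h w := (Num.max (1 + h) (M w) - Num.max 1 (M w)) / h.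
have ratioE h : 0 < h -> (normF P X (1 + h) (fun i => (x i)^-1)
                 - normF P X 1 (fun i => (x i)^-1)) / h =
                 fine (\int[P]_w (g h w)%:E).
  move=> h0.
  have h1 : 0 <= 1 + h by rewrite addr_ge0 // ltW.
  rewrite !normFE //.
  have -> : (fun w => (g h w)%:E) = (fun w => (h^-1)%:E *
      ((Num.max (1 + h) (M w))%:E - (Num.max 1 (M w))%:E))%E.
    by apply/funext => w; rewrite /g -EFinB -EFinM mulrC.
  rewrite integralZl //; last first.
    exact: (integrableB measurableT (intB _ h1) (intB _ ler01)).
  rewrite (integralB_EFin measurableT (intB _ h1) (intB _ ler01)).
  have f1 := integrable_fin_num measurableT (intB _ h1).
  have f0 := integrable_fin_num measurableT (intB _ ler01).
  by rewrite -(fineK f1) -(fineK f0) -EFinB -EFinM /= mulrC.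
pose C := [set w | M w <= 1].
have mC : measurable C.
  have := mM measurableT _ (measurable_itv `]-oo, 1]); rewrite setTI.
  congr measurable; apply/seteqP; split => w /=; rewrite in_itv //=.
have distFE : distF P X x = fine (P C).
  rewrite /distF; congr (fine (P _)); apply/seteqP; split => w /=.
  - move=> H; rewrite /C /M /= bigmax_le1; apply/allP => i _.
    by rewrite gtr0_norm ?invr_gt0 // mulrC ler_pdivrMr // mul1r.
  - rewrite /C /M /= bigmax_le1 => /allP H i; have := H i (mem_index_enum i).
    by rewrite gtr0_norm ?invr_gt0 // mulrC ler_pdivrMr // mul1r.
rewrite distFE.
apply/cvg_at_rightP => u [u0 ucvg].
have mf_ n : measurable_fun setT (EFin \o g (u n) : T -> \bar R).
  apply/measurable_realfun.measurable_EFinP.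
  apply: measurable_realfun.measurable_funM; last exact: measurable_cst.
  by apply: measurable_realfun.measurable_funB; exact: mB.
have mf : measurable_fun setT (EFin \o (\1_C : T -> R) : T -> \bar R).
  exact/measurable_realfun.measurable_EFinP/measurable_realfun.measurable_indic.
have f_f : {ae P, forall w, setT w ->
    (fun n => (g (u n) w)%:E) @ \oo --> (\1_C w : R)%:E}.
  apply: aeW => w _.
  case: (leP (M w) 1) => Mw.
  - rewrite indicE mem_set //; apply: cvg_near_cst; apply: nearW => n.
    have un := u0 n.
    rewrite /g (max_l (x:=1)) // max_l; last by rewrite (le_trans Mw) // lerDl ltW.
    by rewrite addrAC subrr add0r divff // gt_eqF.
  - rewrite indicE memNset; last by rewrite /C /= leNgt Mw.
    have e0 : 0 < M w - 1 by rewrite subr_gt0.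
    apply: cvg_near_cst; move/cvgrPdist_lt : ucvg => /(_ _ e0); apply: filterS => n /=.
    rewrite sub0r normrN => hn.
    have un := u0 n.
    rewrite gtr0_norm // in hn.
    have hle : 1 + u n <= M w by lra.
    by rewrite /g (max_r (ltW Mw)) (max_r hle) subrr mul0r.
have ig : P.-integrable setT (EFin \o cst 1%R).
  exact: finite_measure_integrable_cst.
have f_g : {ae P, forall w n, setT w -> (`|(g (u n) w)%:E| <= (EFin \o cst 1%R) w)%E}.
  apply: aeW => w n _; rewrite /= ?abse_EFin lee_fin.
  have /andP[a b] := @ratio_bounds R (u n) (M w) (u0 n).
  by rewrite ger0_norm.
have [_ _ H] := dominated_convergence measurableT mf_ mf f_f ig f_g.
have Pfin : P C \is a fin_num by apply: fin_num_measure.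
have E : (\int[P]_x (EFin \o (\1_C : T -> R)) x)%E = (fine (P C))%:E.
  by rewrite integral_indic // setIT fineK.
rewrite E in H.
apply: (cvg_trans _ (fine_cvg H)).
apply: near_eq_cvg; apply: nearW => n /=.
by rewrite ratioE.
Qed.
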